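(* Let $X$ be a locally compact Hausdorff totally disconnected topological space, $G$ a discrete group, $K$ a field, and $\phi=(\phi_g,X_g,X)_{g\in G}$ a partial action of $G$ on $X$ with every $X_g$ clopen. Then $V\mapsto A_K(\mathcal{G}_V)$ is a bijection between the open invariant subsets $V$ of $X$ and the graded ideals of the Steinberg algebra $A_K(\mathcal{G}_X)$.
   Context: A partial action of $G$ (identity $\varepsilon$) on a topological space $X$ is $(\phi_g,X_g,X)_{g\in G}$ with $X_g$ open, homeomorphisms $\phi_g:X_{g^{-1}}\to X_g$, and (i) $X_\varepsilon=X$, $\phi_\varepsilon=\operatorname{id}$; (ii) $\phi_g(X_{g^{-1}}\cap X_h)=X_g\cap X_{gh}$; (iii) $\phi_g\phi_h(x)=\phi_{gh}(x)$ for $x\in X_{h^{-1}}\cap X_{h^{-1}g^{-1}}$. $V\subseteq X$ is invariant if $\phi_{g^{-1}}(X_g\cap V)\subseteq X_{g^{-1}}\cap V$ for all $g$. The groupoid $\mathcal{G}_X=\bigcup_g\{g\}\times X_g\subseteq G\times X$ (product topology) has range $r(g,x)=x$, domain $d(g,x)=\phi_{g^{-1}}(x)$, composition $(g,x)(h,y)=(gh,x)$ if $y=\phi_{g^{-1}}(x)$, inverse $(g^{-1},\phi_{g^{-1}}(x))$, and is $G$-graded by $(g,x)\mapsto g$; for open invariant $V$, $\mathcal{G}_V=\bigcup_g\{g\}\times(V\cap X_g)$ is an open subgroupoid, and $A_K(\mathcal{G}_V)$ is identified with the functions in $A_K(\mathcal{G}_X)$ supported in $\mathcal{G}_V$. The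 Steinberg algebra $A_K(\mathcal{H})$ consists of compactly supported locally constant functions $\mathcal{H}\to K$ with convolution $(f*g)(\gamma)=\sum_{\alpha\beta=\gamma}f(\alpha)g(\beta)$, graded by supports in $\{g\}\times X_g$. *)

(* Defs.v *)
From HB Require Import structures.
From mathcomp Require Import all_boot all_algebra.
From Stdlib Require Import List ClassicalEpsilon.
Set Implicit Arguments. Unset Strict Implicit. Unset Printing Implicit Defensive.
Import GRing.Theory.
Local Open Scope ring_scope.

Record topology (T : Type) := Topology {
  open : (T -> Prop) -> Prop;
  open_setT : open (fun _ => True);
  open_I : forall A B, open A -> open B -> open (fun x => A x /\ B x);
  open_U : forall (I : Type) (F : I -> T -> Prop),
      (forall i, open (F i)) -> open (fun x => exists i, F i x) }.

Definition hausdorff T (t : topology T) : Prop :=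
  forall x y : T, x <> y -> exists U W, open t U /\ open t W /\ U x /\ W y /\
    forall z, ~ (U z /\ W z).

Definition compact T (t : topology T) (S : T -> Prop) : Prop :=
  forall (I : Type) (F : I -> T -> Prop), (forall i, open t (F i)) ->
    (forall x, S x -> exists i, F i x) ->
    exists s : list I, forall x, S x -> exists i, In i s /\ F i x.

Definition locally_compact T (t : topology T) : Prop :=
  forall x : T, exists U C, open t U /\ U x /\ compact t C /\ (forall y, U y -> C y).

Definition connected T (t : topology T) (S : T -> Prop) : Prop :=
  ~ exists U W, open t U /\ open t W /\ (forall x, S x -> U x \/ W x) /\
      (exists x, S x /\ U x) /\ (exists x, S x /\ W x) /\
      (forall x, ~ (S x /\ U x /\ W x)).

Definition totally_disconnected T (t : topology T) : Prop :=
  forall S, connected t S -> forall x y, S x -> S y -> x = y.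

Definition clopen T (t : topology T) (A : T -> Prop) : Prop :=
  open t A /\ open t (fun x => ~ A x).

Definition discrete_top (T : Type) : topology T.
Proof. refine (@Topology T (fun _ => True) _ _ _); by []. Defined.

Definition prod_open A B (tA : topology A) (tB : topology B) (W : A * B -> Prop) :=
  forall p, W p -> exists U V, open tA U /\ open tB V /\ U p.1 /\ V p.2 /\
    forall q, U q.1 -> V q.2 -> W q.

Definition prod_top A B (tA : topology A) (tB : topology B) : topology (A * B).
Proof.
refine (@Topology _ (prod_open tA tB) _ _ _).
- move=> p _; exists (fun _ => True), (fun _ => True).
  by do !split; try apply: open_setT.
- move=> W1 W2 h1 h2 p [/h1 [U1 [V1 [oU1 [oV1 [u1 [v1 s1]]]]]]
                      /h2 [U2 [V2 [oU2 [oV2 [u2 [v2 s2]]]]]]].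
  exists (fun a => U1 a /\ U2 a), (fun b => V1 b /\ V2 b).
  do !split; try apply: open_I; try done.
  + by apply: s1; case: H; case: H0.
  + by apply: s2; case: H; case: H0.
- move=> I F hF p [i Fi]; have [U [V [oU [oV [u [v s]]]]]] := hF i p Fi.
  exists U, V; do !split => //; move=> q uq vq; exists i; exact: s.
Defined.

(* f : A -> B (defined on all of X) restricts to a homeomorphism from the
   subspace A onto the subspace B *)
Definition homeo_between X (t : topology X) (A B : X -> Prop) (f : X -> X) : Prop :=
  (forall x, A x -> B (f x)) /\
  (forall y, B y -> exists x, A x /\ f x = y) /\
  (forall x x', A x -> A x' -> f x = f x' -> x = x') /\
  (forall U, open t U -> exists W, open t W /\ forall x, A x -> (U (f x) <-> W x)) /\
  (forall W, open t W -> exists U, open t U /\ forall x, A x -> (W x <-> U (f x))).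

Record group_str (G : Type) := GroupStr {
  gmul : G -> G -> G;
  gone : G;
  ginv : G -> G;
  gmulA : forall a b c, gmul a (gmul b c) = gmul (gmul a b) c;
  gmul1g : forall a, gmul gone a = a;
  gmulg1 : forall a, gmul a gone = a;
  gmulVg : forall a, gmul (ginv a) a = gone;
  gmulgV : forall a, gmul a (ginv a) = gone }.

Record partial_action G (gs : group_str G) X (tX : topology X) := PartialAction {
  pdom : G -> X -> Prop;
  pact : G -> X -> X;                          (* phi_g, meaningful on X_{g^-1} *)
  pdom_open : forall g, open tX (pdom g);
  pact_homeo : forall g, homeo_between tX (pdom (ginv gs g)) (pdom g) (pact g);
  pdom_one : forall x, pdom (gone gs) x;
  pact_one : forall x, pact (gone gs) x = x;
  pdom_comp : forall g h y,
    (pdom g y /\ pdom (gmul gs g h) y) <->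
    (exists x, pdom (ginv gs g) x /\ pdom h x /\ pact g x = y);
  pact_comp : forall g h x, pdom (ginv gs h) x ->
    pdom (gmul gs (ginv gs h) (ginv gs g)) x ->
    pact g (pact h x) = pact (gmul gs g h) x }.

Definition pa_invariant G (gs : group_str G) X (tX : topology X)
    (pa : partial_action gs tX) (V : X -> Prop) : Prop :=
  forall g x, pdom pa g x -> V x ->
    pdom pa (ginv gs g) (pact pa (ginv gs g) x) /\ V (pact pa (ginv gs g) x).

(* ---------- Steinberg algebra A_K(G_X) ----------
   Elements of G_X = { (g,x) | x ∈ X_g } ⊆ G × X (product topology, G discrete).
   A function G_X -> K is represented as f : G -> X -> K vanishing off G_X. *)
Section Steinberg.
Variables (G : Type) (gs : group_str G) (X : Type) (tX : topology X)
  (pa : partial_action gs tX) (K : fieldType).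

Definition GXtop : topology (G * X) := prod_top (discrete_top G) tX.
Definition GX (p : G * X) : Prop := pdom pa p.1 p.2.

Definition supp (f : G -> X -> K) (p : G * X) : Prop :=
  GX p /\ forall W, open GXtop W -> W p -> exists q, W q /\ GX q /\ f q.1 q.2 != 0.

Definition loc_const (f : G -> X -> K) : Prop :=
  forall p, GX p -> exists W, open GXtop W /\ W p /\
    forall q, W q -> GX q -> f q.1 q.2 = f p.1 p.2.

Definition steinberg (f : G -> X -> K) : Prop :=
  (forall g x, f g x != 0 -> pdom pa g x) /\ loc_const f /\ compact GXtop (supp f).

Definition fsum (F : G -> K) : K :=
  epsilon (inhabits 0) (fun v => exists s : list G, NoDup s /\
    (forall a, F a != 0 -> In a s) /\ v = \sum_(a <- s) F a).

(* convolution: (f*h)(c,x) = sum over (a,x)(a^-1 c, phi_{a^-1} x) = (c,x) *)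
Definition conv (f h : G -> X -> K) : G -> X -> K :=
  fun c x => fsum (fun a => f a x * h (gmul gs (ginv gs a) c) (pact pa (ginv gs a) x)).

Definition ideal (I : (G -> X -> K) -> Prop) : Prop :=
  (forall f, I f -> steinberg f) /\
  I (fun _ _ => 0) /\
  (forall f h, I f -> I h -> I (fun g x => f g x - h g x)) /\
  (forall f h, steinberg f -> I h -> I (conv f h) /\ I (conv h f)).

(* graded: the homogeneous component f_g of every f ∈ I lies in I *)
Definition graded_ideal (I : (G -> X -> K) -> Prop) : Prop :=
  ideal I /\
  forall f g h, I f ->
    (forall c x, (c = g /\ h c x = f c x) \/ (c <> g /\ h c x = 0)) -> I h.

(* A_K(G_V) as the functions of A_K(G_X) supported in G_V *)
Definition steinberg_on (V : X -> Prop) (f : G -> X -> K) : Prop :=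
  steinberg f /\ forall g x, f g x != 0 -> V x.

End Steinberg.

(* Main.v *)
Require Import Defs.
From mathcomp Require Import all_boot all_algebra.
From Stdlib Require Import Classical ClassicalEpsilon FunctionalExtensionality PropExtensionality.
From Stdlib Require Permutation.
Set Implicit Arguments. Unset Strict Implicit. Unset Printing Implicit Defensive.
Set Warnings "-notation-overridden,-ambiguous-paths".
Section Topo.
Variables (T : Type) (t : topology T).

Lemma open_ext (A B : T -> Prop) : (forall x, A x <-> B x) -> open t A -> open t B.
Proof.
move=> h oA; have -> : B = A; last done.
apply: functional_extensionality => x; apply: propositional_extensionality; split; apply h.
Qed.

Lemma open_nbhd (S : T -> Prop) :
  (forall x, S x -> exists U, open t U /\ U x /\ forall y, U y -> S y) -> open t S.
Proof.
move=> h.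
have o := @open_U _ t {U : T -> Prop | open t U /\ forall y, U y -> S y} (fun i => proj1_sig i)
  (fun i => proj1 (proj2_sig i)).
apply: open_ext o => x; split.
- by case=> [[U [oU sU]] /= Ux]; apply: sU.
- move=> Sx; have [U [oU [Ux sU]]] := h x Sx.
  by exists (exist _ U (conj oU sU)).
Qed.

Lemma open_empty : open t (fun _ => False).
Proof. by apply: open_nbhd => x []. Qed.

Lemma compact_ext (A B : T -> Prop) : (forall x, A x <-> B x) -> compact t A -> compact t B.
Proof.
move=> h cA I F oF cov; have [s hs] := cA I F oF (fun x Ax => cov x (proj1 (h x) Ax)).
by exists s => x /h /hs.
Qed.

Lemma compact_empty : compact t (fun _ => False).
Proof. by move=> I F _ _; exists nil => x []. Qed.

Lemma compact_U (A B : T -> Prop) : compact t A -> compact t B ->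
  compact t (fun x => A x \/ B x).
Proof.
move=> cA cB I F oF cov.
have [s1 h1] := cA I F oF (fun x Ax => cov x (or_introl Ax)).
have [s2 h2] := cB I F oF (fun x Bx => cov x (or_intror Bx)).
exists (s1 ++ s2)%list => x [/h1|/h2] [i [ii Fi]]; exists i; split => //;
  apply List.in_or_app; tauto.
Qed.

Lemma compact_I_closed (C D : T -> Prop) : compact t C -> open t (fun x => ~ D x) ->
  compact t (fun x => C x /\ D x).
Proof.
move=> cC oD I F oF cov.
pose F' (o : option I) := match o with Some i => F i | None => fun x => ~ D x end.
have oF' : forall o, open t (F' o) by case.
have cov' : forall x, C x -> exists o, F' o x.
  move=> x Cx; case: (classic (D x)) => Dx.
  - by have [i Fi] := cov x (conj Cx Dx); exists (Some i).
  - by exists None.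
have [s hs] := cC _ F' oF' cov'.
exists (List.flat_map (fun o => match o with Some i => [:: i] | None => [::] end) s).
move=> x [Cx Dx]; have [[i|] [io Fo]] := hs x Cx; last by [].
exists i; split => //; apply List.in_flat_map; exists (Some i); split => //=; by left.
Qed.

Lemma compact_closed_sub (C S : T -> Prop) : compact t C -> (forall x, S x -> C x) ->
  open t (fun x => ~ S x) -> compact t S.
Proof.
move=> cC sub oS; apply: compact_ext (compact_I_closed cC oS) => x; split; first by case.
by move=> Sx; split => //; apply: sub.
Qed.

Lemma open_Ilist (A : Type) (s : list A) (F : A -> T -> Prop) :
  (forall a, List.In a s -> open t (F a)) -> open t (fun x => forall a, List.In a s -> F a x).
Proof.
elim: s => [|a s IH] h /=.
  by apply: open_ext (open_setT t) => x; split => // _ a [].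
have o := open_I (h a (or_introl erefl)) (IH (fun b bi => h b (or_intror bi))).
apply: open_ext o => x; split.
- by case=> Fa Fs b [<-|bi]; [done| apply: Fs].
- by move=> H; split; [apply: H; left | move=> b bi; apply: H; right].
Qed.

Lemma open_Ulist (A : Type) (s : list A) (F : A -> T -> Prop) :
  (forall a, open t (F a)) -> open t (fun x => exists a, List.In a s /\ F a x).
Proof.
move=> h; apply: open_nbhd => x [a [ai Fa]]; exists (F a); split => //; split => //.
by move=> y Fy; exists a.
Qed.

Hypothesis hH : hausdorff t.

Lemma sep_point_compact (x : T) (B : T -> Prop) : compact t B -> ~ B x ->
  exists U W, open t U /\ open t W /\ U x /\ (forall y, B y -> W y) /\
    forall z, ~ (U z /\ W z).
Proof.
move=> cB nBx.
have H : forall y, B y -> exists UW : (T -> Prop) * (T -> Prop), open t UW.1 /\ open t UW.2 /\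
   UW.1 x /\ UW.2 y /\ forall z, ~ (UW.1 z /\ UW.2 z).
  move=> y By; have [U [W h]] := hH (x:=x) (y:=y) (fun e => nBx (eq_ind_r B By e)).
  by exists (U, W).
pose I := {y : T & {UW : (T -> Prop) * (T -> Prop) | open t UW.1 /\ open t UW.2 /\
   UW.1 x /\ UW.2 y /\ forall z, ~ (UW.1 z /\ UW.2 z)}}.
have cov : forall y, B y -> exists i : I, (projT1 (projT2 i)).2 y.
  move=> y By; have [UW h] := H y By.
  by exists (existT _ y (exist _ UW h)); exact: (proj1 (proj2 (proj2 (proj2 h)))).
have [s hs] := cB I (fun i => (projT1 (projT2 i)).2)
  (fun i => proj1 (proj2 (proj2_sig (projT2 i)))) cov.
exists (fun z => forall i, List.In i s -> (projT1 (projT2 i)).1 z).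
exists (fun z => exists i, List.In i s /\ (projT1 (projT2 i)).2 z).
split; first by apply: open_Ilist => i _; case: (proj2_sig (projT2 i)).
split; first by apply: open_Ulist => i; case: (proj2_sig (projT2 i)) => _ [].
split; first by move=> i _; case: (proj2_sig (projT2 i)) => _ [_ []].
split; first by [].
move=> z [Uz [i [ii Wz]]]; have := Uz i ii.
by case: (proj2_sig (projT2 i)) => _ [_ [_ [_ d]]] Ui; apply: (d z).
Qed.

Lemma compact_closed (C : T -> Prop) : compact t C -> open t (fun x => ~ C x).
Proof.
move=> cC; apply: open_nbhd => x nCx.
have [U [W [oU [oW [Ux [sW d]]]]]] := sep_point_compact cC nCx.
exists U; split => //; split => // y Uy Cy; exact: (d y (conj Uy (sW y Cy))).
Qed.

Lemma sep_compact_compact (A B : T -> Prop) : compact t A -> compact t B ->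
  (forall z, ~ (A z /\ B z)) ->
  exists U W, open t U /\ open t W /\ (forall y, A y -> U y) /\ (forall y, B y -> W y) /\
    forall z, ~ (U z /\ W z).
Proof.
move=> cA cB dAB.
pose P (x : T) (UW : (T -> Prop) * (T -> Prop)) := open t UW.1 /\ open t UW.2 /\
   UW.1 x /\ (forall y, B y -> UW.2 y) /\ forall z, ~ (UW.1 z /\ UW.2 z).
pose I := {x : T & {UW | P x UW}}.
have cov : forall x, A x -> exists i : I, (projT1 (projT2 i)).1 x.
  move=> x Ax; have [U [W h]] := sep_point_compact cB (fun Bx => dAB x (conj Ax Bx)).
  by exists (existT _ x (exist _ (U, W) h)); exact: (proj1 (proj2 (proj2 h))).
have [s hs] := cA I (fun i => (projT1 (projT2 i)).1)
  (fun i => proj1 (proj2_sig (projT2 i))) cov.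
exists (fun z => exists i, List.In i s /\ (projT1 (projT2 i)).1 z).
exists (fun z => forall i, List.In i s -> (projT1 (projT2 i)).2 z).
split; first by apply: open_Ulist => i; case: (proj2_sig (projT2 i)).
split; first by apply: open_Ilist => i _; case: (proj2_sig (projT2 i)) => _ [].
split; first by [].
split; first by move=> y By i _; case: (proj2_sig (projT2 i)) => _ [_ [_ []]] h _; apply: h.
move=> z [[i [ii Uz]] Wz]; have := Wz i ii.
by case: (proj2_sig (projT2 i)) => _ [_ [_ [_ d]]] Wi; apply: (d z).
Qed.

End Topo.
Section ZeroDim.
Variables (T : Type) (t : topology T).
Hypotheses (hH : hausdorff t) (hLC : locally_compact t) (hTD : totally_disconnected t).

Lemma open_or (A B : T -> Prop) : open t A -> open t B -> open t (fun x => A x \/ B x).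
Proof.
move=> oA oB; apply: open_nbhd => x [Ax|Bx].
- by exists A; split => //; split => // y Ay; left.
- by exists B; split => //; split => // y Ay; right.
Qed.

Lemma zero_dim (x : T) (O : T -> Prop) : open t O -> O x ->
  exists U, compact t U /\ open t U /\ open t (fun y => ~ U y) /\ U x /\
    forall y, U y -> O y.
Proof.
move=> oO Ox.
have [U0 [C [oU0 [U0x [cC sU0]]]]] := hLC x.
have oCc := compact_closed hH cC.
pose rc (P : T -> Prop) := (forall y, P y -> C y) /\ open t (fun y => P y \/ ~ C y) /\
   open t (fun y => ~ P y).
pose Q y := forall P, rc P -> P x -> P y.
have rcC : rc C.
  split => //; split => //; apply: open_ext (open_setT t) => y; split => // _.
  exact: classic.
have QC : forall y, Q y -> C y by move=> y Qy; apply: Qy rcC (sU0 _ U0x).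
have Qx : Q x by [].
have oQ : open t (fun y => ~ Q y).
  apply: open_nbhd => y nQy.
  have [P hP] := not_all_ex_not _ _ nQy.
  have [rcP [Px nPy]] : rc P /\ P x /\ ~ P y.
    have [h1 h] := imply_to_and _ _ hP; have [h2 h3] := imply_to_and _ _ h; by [].
  exists (fun z => ~ P z); split; first by case: rcP => _ [].
  by split => // z nPz Qz; exact: nPz (Qz P rcP Px).
have cQ : compact t Q by apply: compact_closed_sub cC QC oQ.
have sep : forall D, compact t D -> (forall y, D y -> ~ Q y) ->
    exists P, rc P /\ P x /\ forall y, D y -> ~ P y.
  move=> D cD DQ.
  pose I := {P | rc P /\ P x}.
  have cov : forall y, D y -> exists i : I, ~ proj1_sig i y.
    move=> y Dy; have [P hP] := not_all_ex_not _ _ (DQ y Dy).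
    have [rcP h] := imply_to_and _ _ hP; have [Px nPy] := imply_to_and _ _ h.
    by exists (exist _ P (conj rcP Px)).
  have [s hs] := cD I (fun i y => ~ proj1_sig i y)
    (fun i => proj2 (proj2 (proj1 (proj2_sig i)))) cov.
  exists (fun y => C y /\ forall i, List.In i s -> proj1_sig i y).
  split; [split; [by move=> y []| split] | split].
  - apply: open_ext (open_Ilist (s := s)
      (F := fun i y => proj1_sig i y \/ ~ C y) _) => [y|i _]; last first.
      by case: (proj2_sig i) => [[_ []]].
    split.
    + move=> H; case: (classic (C y)) => Cy; [left | by right].
      by split => // i ii; case: (H i ii).
    + by case=> [[Cy H] i ii|nCy i ii]; [left; apply: H | right].
  - apply: open_nbhd => y H; destruct (not_and_or _ _ H) as [nCy|nall].
    + exists (fun z => ~ C z); split => //; split => // z nCz [Cz _]; exact: nCz Cz.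
    + have [i hi] := not_all_ex_not _ _ nall.
      have [ii nPy] := imply_to_and _ _ hi.
      exists (fun z => ~ proj1_sig i z); split.
        by case: (proj2_sig i) => [[_ []]].
      by split => // z nPz [_ H1]; exact: nPz (H1 i ii).
  - by split; [apply: sU0 | move=> i _; case: (proj2_sig i)].
  - move=> y Dy [_ H]; have [i [ii nPy]] := hs y Dy; exact/nPy/H.
(* Q is connected, hence a singleton *)
have Qconn : connected t Q.
  move=> [U [W [oU [oW [covQ [[zU [QzU UzU]] [[zW [QzW WzW]] dQ]]]]]]].
  have cA : compact t (fun y => Q y /\ ~ W y).
    by apply: compact_I_closed cQ _; apply: open_ext oW => y; split => [|/NNPP] //; tauto.
  have cB : compact t (fun y => Q y /\ ~ U y).
    by apply: compact_I_closed cQ _; apply: open_ext oU => y; split => [|/NNPP] //; tauto.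
  have dAB : forall z, ~ ((Q z /\ ~ W z) /\ (Q z /\ ~ U z)).
    by move=> z [[Qz nW] [_ nU]]; case: (covQ z Qz).
  have [U' [W' [oU' [oW' [sA [sB dUW]]]]]] := sep_compact_compact hH cA cB dAB.
  have QUW : forall y, Q y -> U' y \/ W' y.
    move=> y Qy; case: (classic (W y)) => Wy.
    - case: (classic (U y)) => Uy; first by case: (dQ y).
      by right; apply: sB.
    - by left; apply: sA.
  have cD : compact t (fun y => C y /\ ~ (U' y \/ W' y)).
    apply: compact_I_closed cC _; apply: open_ext (open_or oU' oW') => y.
    by split => [|/NNPP] //; tauto.
  have [P [[PC [oPC onP]] [Px PD]]] := sep _ cD (fun y '(conj _ h) Qy => h (QUW y Qy)).
  have PUW : forall y, P y -> U' y \/ W' y.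
    by move=> y Py; apply: NNPP => h; apply: (PD y) => //; split => //; apply: PC.
  have key : forall Y Z : T -> Prop, open t Y -> open t Z -> (forall z, ~ (Y z /\ Z z)) ->
      (forall y, P y -> Y y \/ Z y) -> Y x -> forall y, Q y -> Y y.
    move=> Y Z oY oZ dYZ PYZ Yx y Qy.
    have : rc (fun z => P z /\ Y z).
      split; first by move=> z [/PC].
      split.
      - apply: open_ext (open_I oPC (open_or oY oCc)) => z; split.
        + case=> [[Pz|nCz] [Yz|nCz']]; try by right. by left.
        + by case=> [[Pz Yz]|nCz]; split; [left|left|right|right].
      - apply: open_ext (open_or onP oZ) => z; split.
        + case=> [nPz [Pz _]|Zz [_ Yz]]; [done | exact: (dYZ z)].
        + move=> /not_and_or [nPz|nYz]; first by left.
          case: (classic (P z)) => Pz; last by left.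
          by right; case: (PYZ z Pz).
    by move=> rcPY; case: (Qy _ rcPY (conj Px Yx)).
  case: (QUW x Qx) => [U'x|W'x].
  - have := key U' W' oU' oW' dUW PUW U'x zW QzW.
    have nUzW : ~ U zW by move=> UzW'; apply: (dQ zW).
    by move=> U'z; apply: (dUW zW); split => //; apply: sB.
  - have := key W' U' oW' oU' (fun z '(conj a b) => dUW z (conj b a))
      (fun y Py => match PUW y Py with or_introl a => or_intror a | or_intror b => or_introl b end) W'x zU QzU.
    have nWzU : ~ W zU by move=> WzU; apply: (dQ zU).
    by move=> W'z; apply: (dUW zU); split => //; apply: sA.
have Qsing : forall y, Q y -> y = x by move=> y Qy; apply: (hTD Qconn) => //.
have cD : compact t (fun y => C y /\ ~ (U0 y /\ O y)).
  apply: compact_I_closed cC _; apply: open_ext (open_I oU0 oO) => y.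
  by split => [|/NNPP] //; tauto.
have [P [[PC [oPC onP]] [Px PD]]] : exists P, rc P /\ P x /\
    forall y, (C y /\ ~ (U0 y /\ O y)) -> ~ P y.
  apply: (sep _ cD) => y [_ h] Qy; apply: h; by rewrite (Qsing y Qy); split.
have PUO : forall y, P y -> U0 y /\ O y.
  by move=> y Py; apply: NNPP => h; apply: (PD y) => //; split => //; apply: PC.
exists P; split; first exact: compact_closed_sub cC PC onP.
split.
  apply: open_ext (open_I oPC oU0) => y; split; last by move=> Py; split; [left|case: (PUO y Py)].
  by case=> [[Py|nCy] U0y] //; case: nCy; apply: sU0.
by split => //; split => // y /PUO [].
Qed.

End ZeroDim.
Section Grp.
Variables (G : Type) (gs : group_str G).

Lemma ginv_uniq a b : gmul gs a b = gone gs -> ginv gs a = b.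
Proof.
move=> e; rewrite -(gmulg1 gs (ginv gs a)) -e gmulA gmulVg gmul1g //.
Qed.

Lemma ginvK a : ginv gs (ginv gs a) = a.
Proof. by apply: ginv_uniq; rewrite gmulVg. Qed.

Lemma ginv1 : ginv gs (gone gs) = gone gs.
Proof. by apply: ginv_uniq; rewrite gmul1g. Qed.

Lemma gmulKV a b : gmul gs (ginv gs a) (gmul gs a b) = b.
Proof. by rewrite gmulA gmulVg gmul1g. Qed.

Lemma gmulVK a b : gmul gs a (gmul gs (ginv gs a) b) = b.
Proof. by rewrite gmulA gmulgV gmul1g. Qed.

Lemma ginv_solve a a0 c g : gmul gs (ginv gs a) c = g -> gmul gs (ginv gs a0) c = g -> a = a0.
Proof.
move=> e1 e2.
have h1 : c = gmul gs a g by rewrite -e1 gmulVK.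
have h2 : c = gmul gs a0 g by rewrite -e2 gmulVK.
have : gmul gs (gmul gs a g) (ginv gs g) = gmul gs (gmul gs a0 g) (ginv gs g) by rewrite -h1 -h2.
by rewrite -!gmulA !gmulgV !gmulg1.
Qed.

End Grp.

Section PA.
Variables (G : Type) (gs : group_str G) (X : Type) (tX : topology X)
  (pa : partial_action gs tX).

Lemma pact_dom g x : pdom pa g x -> pdom pa (ginv gs g) (pact pa (ginv gs g) x).
Proof.
move=> h; have [H _] := pact_homeo pa (ginv gs g); apply: H; by rewrite ginvK.
Qed.

Lemma pact_K g x : pdom pa g x -> pact pa g (pact pa (ginv gs g) x) = x.
Proof.
move=> h; rewrite pact_comp ?gmulgV ?pact_one ?ginvK ?gmulgV //; last by apply: pdom_one.
Qed.

Lemma pact_cont g (U : X -> Prop) : open tX U ->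
  exists W, open tX W /\ forall y, pdom pa g y -> (U (pact pa (ginv gs g) y) <-> W y).
Proof.
move=> oU; have [_ [_ [_ [H _]]]] := pact_homeo pa (ginv gs g).
have [W [oW hW]] := H U oU; exists W; split => // y; rewrite -{1}(ginvK gs g); exact: hW.
Qed.

Lemma pdom_mul a c x : pdom pa a x -> pdom pa (gmul gs (ginv gs a) c) (pact pa (ginv gs a) x) ->
  pdom pa c x.
Proof.
move=> ha hc.
have [_ H] := pdom_comp pa a (gmul gs (ginv gs a) c) x.
have [_ ] := H (ex_intro _ (pact pa (ginv gs a) x) (conj (pact_dom ha) (conj hc (pact_K ha)))).
by rewrite gmulVK.
Qed.

Hypothesis hclopen : forall g, clopen tX (pdom pa g).

Lemma open_GX_intro (W : G * X -> Prop) :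
  (forall p, W p -> exists U, open tX U /\ U p.2 /\ forall y, U y -> W (p.1, y)) ->
  open (GXtop G tX) W.
Proof.
move=> h p Wp; have [U [oU [Up hU]]] := h p Wp.
exists (fun c => c = p.1), U; do !split => //.
by case=> c y /= -> Uy; apply: hU.
Qed.

Lemma open_GX_elim (W : G * X -> Prop) c x : open (GXtop G tX) W -> W (c, x) ->
  exists U, open tX U /\ U x /\ forall y, U y -> W (c, y).
Proof.
move=> oW Wp; have [A [U [_ [oU [Ac [Ux h]]]]]] := oW (c, x) Wp.
exists U; split => //; split => // y Uy; exact: (h (c, y)).
Qed.

Lemma open_GX_slice (U : X -> Prop) c : open tX U -> open (GXtop G tX) (fun p => p.1 = c /\ U p.2).
Proof.
move=> oU; apply: open_GX_intro => [[d y]] /= [-> Uy]; exists U; do !split => //.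
Qed.

Lemma open_GX_cyl (U : X -> Prop) : open tX U -> open (GXtop G tX) (fun p => U p.2).
Proof. by move=> oU; apply: open_GX_intro => [[d y]] /= Uy; exists U. Qed.

Lemma open_nGX : open (GXtop G tX) (fun p => ~ GX pa p).
Proof.
apply: open_GX_intro => [[d y]] /= ny; exists (fun z => ~ pdom pa d z).
by split => //; case: (hclopen d).
Qed.

Lemma open_slice_of (W : G * X -> Prop) c : open (GXtop G tX) W -> open tX (fun y => W (c, y)).
Proof.
move=> oW; apply: open_nbhd => y Wy; have [U [oU [Uy h]]] := open_GX_elim oW Wy.
by exists U.
Qed.

Lemma compact_list_prod (l : list G) (C : X -> Prop) : compact tX C ->
  compact (GXtop G tX) (fun p => List.In p.1 l /\ C p.2).
Proof.
move=> cC; elim: l => [|c l IH].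
  by apply: (compact_ext _ (@compact_empty _ _)) => p; split => // [[]].
have cc : compact (GXtop G tX) (fun p => p.1 = c /\ C p.2).
  move=> I F oF cov.
  have [s hs] := cC I (fun i y => F i (c, y)) (fun i => open_slice_of c (oF i))
    (fun y Cy => cov (c, y) (conj erefl Cy)).
  by exists s => [[d y]] /= [-> Cy]; apply: hs.
apply: compact_ext (compact_U cc IH) => p; split.
- by case=> [[e Cp]|[i Cp]]; split => //; [left|right].
- by case=> [[e|i] Cp]; [left|right].
Qed.

Lemma compact_proj (S : G * X -> Prop) : compact (GXtop G tX) S ->
  compact tX (fun y => exists c, S (c, y)).
Proof.
move=> cS I F oF cov.
have cov' : forall p, S p -> exists i, F i p.2.
  by case=> a b Sp; apply: cov; exists a.
have [s hs] := cS I (fun i p => F i p.2) (fun i => open_GX_cyl (oF i)) cov'.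
by exists s => y [c Sc]; apply: (hs (c, y)).
Qed.

End PA.
Section Stein.
Import GRing.Theory.
Local Open Scope ring_scope.
Variables (G : Type) (gs : group_str G) (X : Type) (tX : topology X)
  (pa : partial_action gs tX) (K : fieldType).
Hypothesis hclopen : forall g, clopen tX (pdom pa g).

Notation GXt := (GXtop G tX).
Definition vanish (f : G -> X -> K) := forall g x, f g x != 0 -> pdom pa g x.

Definition bisv (v : K) (g : G) (W : X -> Prop) : G -> X -> K :=
  fun c y => if excluded_middle_informative (c = g /\ W y) then v else 0.

Lemma bisvT v g W c y : c = g -> W y -> bisv v g W c y = v.
Proof. by rewrite /bisv => e w; case: excluded_middle_informative => // [[]]. Qed.

Lemma bisvF v g W c y : ~ (c = g /\ W y) -> bisv v g W c y = 0.
Proof. by rewrite /bisv => n; case: excluded_middle_informative. Qed.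

Lemma bisv_nz v g W c y : bisv v g W c y != 0 -> c = g /\ W y.
Proof.
move=> nz; apply: NNPP => n; move: nz; by rewrite bisvF // eqxx.
Qed.

Lemma bisv_gW v g W y : bisv v g W g y = if excluded_middle_informative (W y) then v else 0.
Proof.
case: excluded_middle_informative => w; first by rewrite bisvT.
by rewrite bisvF // => [[]].
Qed.

Lemma supp_iff (f : G -> X -> K) : vanish f -> loc_const pa f ->
  forall p, supp pa f p <-> f p.1 p.2 != 0.
Proof.
move=> van lc p; split.
- move=> [GXp H]; apply/negP => /eqP e.
  have [W [oW [Wp hW]]] := lc p GXp.
  have [q [Wq [GXq nq]]] := H W oW Wp.
  by move: nq; rewrite hW // e eqxx.
- move=> nz; have GXp : GX pa p by case: p nz => a b; apply: van.
  by split => // W oW Wp; exists p.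
Qed.

Lemma open_GX_fst c : open GXt (fun q => q.1 = c).
Proof.
apply: open_GX_intro => -[d y] /= ->; exists (fun _ => True); split => //.
exact: open_setT.
Qed.

Lemma open_zero (f : G -> X -> K) : vanish f -> loc_const pa f ->
  open GXt (fun p => ~ (f p.1 p.2 != 0)).
Proof.
move=> van lc; apply: open_nbhd => -[c x] /= /negP /negPn /eqP fz.
case: (classic (GX pa (c, x))) => GXp.
- have [W [oW [Wp hW]]] := lc _ GXp; exists W; split => //; split => // -[d y] Wq.
  case: (classic (GX pa (d, y))) => GXq; first by rewrite /= (hW _ Wq GXq) /= fz eqxx.
  by move=> /van.
- exists (fun p => ~ GX pa p); split; first exact: open_nGX.
  by split => // -[d y] nq /van.
Qed.

Lemma steinberg_intro (f : G -> X -> K) (C : G * X -> Prop) : vanish f -> loc_const pa f ->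
  compact GXt C -> (forall p, f p.1 p.2 != 0 -> C p) -> steinberg pa f.
Proof.
move=> van lc cC sub; split => //; split => //.
apply: compact_ext (fun p => iff_sym (supp_iff van lc p)) _.
apply: compact_closed_sub cC sub _; exact: open_zero.
Qed.

Lemma steinberg_N (f : G -> X -> K) : steinberg pa f -> compact GXt (fun p => f p.1 p.2 != 0).
Proof.
move=> [van [lc cs]]; exact: compact_ext (supp_iff van lc) cs.
Qed.

Definition Gdec : forall a b : G, {a = b} + {a <> b} :=
  fun a b => excluded_middle_informative (a = b).

Lemma fin_support (f : G -> X -> K) : steinberg pa f ->
  exists s : list G, List.NoDup s /\ forall a y, f a y != 0 -> List.In a s.
Proof.
move=> sf; have cN := steinberg_N sf.
have [l hl] := cN G (fun a p => p.1 = a) open_GX_fst (fun p _ => ex_intro _ p.1 erefl).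
exists (List.nodup Gdec l); split; first exact: List.NoDup_nodup.
move=> a y nz; apply/List.nodup_In; have [b [bl e]] := hl (a, y) nz.
by simpl in e; subst b.
Qed.

Lemma big_Perm (F : G -> K) (s1 s2 : list G) : Permutation.Permutation s1 s2 ->
  \sum_(a <- s1) F a = \sum_(a <- s2) F a.
Proof.
elim => [|x l l' _ IH|x y l|l l' l'' _ IH1 _ IH2]; rewrite ?big_cons ?IH //.
- by rewrite addrCA.
- by rewrite IH1.
Qed.

Lemma sum_filter (F : G -> K) (s : list G) :
  \sum_(a <- s) F a = \sum_(a <- List.filter (fun a => F a != 0) s) F a.
Proof.
elim: s => [|x s IH] /=; first by [].
rewrite big_cons IH; case: eqP => [->|_]; first by rewrite add0r.
by rewrite big_cons.
Qed.

Lemma fsum_eq (F : G -> K) (s : list G) : List.NoDup s -> (forall a, F a != 0 -> List.In a s) ->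
  fsum F = \sum_(a <- s) F a.
Proof.
move=> nd cov; rewrite /fsum.
have ex : exists v, exists s : list G, List.NoDup s /\ (forall a, F a != 0 -> List.In a s) /\
    v = \sum_(a <- s) F a by exists (\sum_(a <- s) F a), s.
have [s' [nd' [cov' ->]]] := epsilon_spec (inhabits 0) _ ex.
rewrite (sum_filter F s) (sum_filter F s'); apply: big_Perm.
apply: Permutation.NoDup_Permutation; try exact: List.NoDup_filter.
move=> x; rewrite !List.filter_In; split => -[_ nz]; split => //.
- exact: cov nz.
- exact: cov' nz.
Qed.

Lemma fsum_single (F : G -> K) a0 : (forall a, a <> a0 -> F a = 0) -> fsum F = F a0.
Proof.
move=> h; rewrite (fsum_eq (s := [:: a0])).
- by rewrite big_cons big_nil addr0.
- by constructor; [by [] | constructor].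
- move=> a nz; left; apply: NNPP => ne; move: nz; rewrite h ?eqxx // => e; exact: ne (esym e).
Qed.

Lemma fsum_zero (F : G -> K) : (forall a, F a = 0) -> fsum F = 0.
Proof.
move=> h; rewrite (fsum_eq (s := [::])) ?big_nil //; first by constructor.
by move=> a; rewrite h eqxx.
Qed.

Lemma fsum_nz (F : G -> K) : fsum F != 0 -> exists a, F a != 0.
Proof.
move=> nz; apply: NNPP => h; move: nz; rewrite fsum_zero ?eqxx // => a.
apply: NNPP => ne; apply: h; exists a; exact/eqP.
Qed.

Lemma conv_bis_l v g W (h : G -> X -> K) c y :
  conv pa (bisv v g W) h c y = bisv v g W g y * h (gmul gs (ginv gs g) c) (pact pa (ginv gs g) y).
Proof.
rewrite /conv (fsum_single (a0 := g)) // => a ne.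
by rewrite bisvF ?mul0r // => -[].
Qed.

Lemma conv_bis_r (f : G -> X -> K) v g W c x a0 : gmul gs (ginv gs a0) c = g ->
  conv pa f (bisv v g W) c x = f a0 x * bisv v g W g (pact pa (ginv gs a0) x).
Proof.
move=> e; rewrite /conv (fsum_single (a0 := a0)) ?e // => a ne.
rewrite bisvF ?mulr0 // => -[e' _]; apply: ne; exact: ginv_solve e' e.
Qed.

Lemma steinberg_bisv v g (W : X -> Prop) : open tX W -> open tX (fun y => ~ W y) ->
  compact tX W -> (forall y, W y -> pdom pa g y) -> steinberg pa (bisv v g W).
Proof.
move=> oW onW cW sW.
have van : vanish (bisv v g W).
  move=> c y; case: (classic (c = g /\ W y)) => [[-> /sW] //|n].
  by rewrite bisvF // eqxx.
apply: (steinberg_intro (C := fun p => List.In p.1 [:: g] /\ W p.2)) => //.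
- move=> [c y] _.
  exists (fun q => q.1 = c /\ (W q.2 <-> W y)); split.
    case: (classic (W y)) => Wy.
    + apply: (open_ext _ (open_GX_slice (c:=c) oW)) => -[d z] /=; split => -[-> h]; split => //; tauto.
    + apply: (open_ext _ (open_GX_slice (c:=c) onW)) => -[d z] /=; split => -[-> h]; split => //; tauto.
  split; first by split.
  move=> [d z] [/= -> hz] _; rewrite /bisv.
  case: excluded_middle_informative => h1; case: excluded_middle_informative => h2 //.
  + by case: h2; case: h1 => -> /hz.
  + by case: h1; case: h2 => -> /hz.
- exact: compact_list_prod.
- move=> [c y] /=; case: (classic (c = g /\ W y)) => [[-> Wy] _|n]; first by split => //; left.
  by rewrite bisvF // eqxx.
Qed.

Lemma steinberg_zero : steinberg pa (fun _ _ => (0 : K)).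
Proof.
apply: (steinberg_intro (C := fun _ => False)).
- by move=> g x; rewrite eqxx.
- move=> p _; exists (fun _ => True); split; [exact: open_setT | split => //].
- exact: compact_empty.
- by move=> p; rewrite eqxx.
Qed.

Lemma steinberg_sub (f h : G -> X -> K) : steinberg pa f -> steinberg pa h ->
  steinberg pa (fun g x => f g x - h g x).
Proof.
move=> sf sh; have [vf [lf _]] := sf; have [vh [lh _]] := sh.
apply: (steinberg_intro (C := fun p => f p.1 p.2 != 0 \/ h p.1 p.2 != 0)).
- move=> g x nz; case: (boolP (f g x != 0)) => [/vf //|/negPn/eqP fz].
  by apply: vh; move: nz; rewrite fz sub0r oppr_eq0.
- move=> p GXp; have [W1 [o1 [p1 h1]]] := lf p GXp; have [W2 [o2 [p2 h2]]] := lh p GXp.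
  exists (fun q => W1 q /\ W2 q); split; first exact: open_I.
  by split => // q [q1 q2] GXq; rewrite h1 ?h2.
- exact: compact_U (steinberg_N sf) (steinberg_N sh).
- move=> p nz; case: (boolP (f p.1 p.2 != 0)) => [|/negPn/eqP fz]; first by left.
  by right; move: nz; rewrite fz sub0r oppr_eq0.
Qed.

Lemma steinberg_comp (f h : G -> X -> K) g : steinberg pa f ->
  (forall c x, (c = g /\ h c x = f c x) \/ (c <> g /\ h c x = 0)) -> steinberg pa h.
Proof.
move=> sf hh; have [vf [lf _]] := sf.
have sub : forall c x, h c x != 0 -> f c x != 0.
  by move=> c x; case: (hh c x) => -[_ ->] //; rewrite eqxx.
apply: (steinberg_intro (C := fun p => f p.1 p.2 != 0)).
- by move=> c x /sub /vf.
- move=> [c x] GXp; have [W [oW [Wp hW]]] := lf _ GXp.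
  exists (fun q => W q /\ q.1 = c); split; first exact: open_I oW (open_GX_fst (c:=c)).
  split => // -[d y] [Wq /= ed] GXq; subst d.
  case: (hh c x) => -[e ->]; case: (hh c y) => -[e' ->] //.
  by rewrite (hW (c, y)).
- exact: steinberg_N sf.
- by move=> [c x] /sub.
Qed.


Lemma van0 (f : G -> X -> K) g x : vanish f -> ~ pdom pa g x -> f g x = 0.
Proof. by move=> van n; apply/eqP; apply: NNPP => /negP /van. Qed.

Lemma sum_eq_In (F F' : G -> K) (s : list G) : (forall a, List.In a s -> F a = F' a) ->
  \sum_(a <- s) F a = \sum_(a <- s) F' a.
Proof.
elim: s => [|a s IH] h; first by rewrite !big_nil.
by rewrite !big_cons h ?IH //; [move=> b bi; apply: h; right | left].
Qed.

Lemma mul_nz (x y : K) : x * y != 0 -> x != 0 /\ y != 0.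
Proof. by rewrite mulf_eq0 negb_or => /andP. Qed.

Lemma conv_steinberg (f h : G -> X -> K) : steinberg pa f -> steinberg pa h ->
  steinberg pa (conv pa f h).
Proof.
move=> sf sh; have [vf [lf _]] := sf; have [vh [lh _]] := sh.
have [lf_ [ndf covf]] := fin_support sf; have [lh_ [ndh covh]] := fin_support sh.
pose T c y a := f a y * h (gmul gs (ginv gs a) c) (pact pa (ginv gs a) y).
have conv_eq : forall c y, conv pa f h c y = \sum_(a <- lf_) T c y a.
  move=> c y; rewrite /conv (fsum_eq ndf) // => a /mul_nz [nz _]; exact: covf nz.
have nz_term : forall c y, conv pa f h c y != 0 -> exists a, f a y != 0 /\
    h (gmul gs (ginv gs a) c) (pact pa (ginv gs a) y) != 0.
  by move=> c y /fsum_nz [a /mul_nz]; exists a.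
have van : vanish (conv pa f h).
  move=> c y /nz_term [a [/vf ha /vh hb]]; exact: pdom_mul ha hb.
have term_lc : forall c x a, exists N, open tX N /\ N x /\ forall y, N y -> T c y a = T c x a.
  move=> c x a; rewrite /T.
  set b := gmul gs (ginv gs a) c.
  case: (classic (pdom pa a x)) => ax; last first.
    exists (fun y => ~ pdom pa a y); split; first by case: (hclopen a).
    by split => // y ny; rewrite !(van0 vf) ?mul0r.
  have [W1 [oW1 [W1p hW1]]] := lf (a, x) ax.
  have [N1 [oN1 [N1x hN1]]] := open_GX_elim oW1 W1p.
  case: (classic (pdom pa b (pact pa (ginv gs a) x))) => bz.
  - have [W2 [oW2 [W2p hW2]]] := lh (b, _) bz.
    have [M [oM [Mz hM]]] := open_GX_elim oW2 W2p.
    have [Wc [oWc hWc]] := pact_cont pa a (open_I oM (proj1 (hclopen b))).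
    exists (fun y => (N1 y /\ pdom pa a y) /\ Wc y); split.
      by apply: open_I => //; apply: open_I => //; case: (hclopen a).
    split; first by split => //; apply/hWc.
    move=> y [[N1y ay] Wcy]; have [My bzy] := proj2 (hWc y ay) Wcy.
    have e1 : f a y = f a x := hW1 (a, y) (hN1 y N1y) ay.
    have e2 : h b (pact pa (ginv gs a) y) = h b (pact pa (ginv gs a) x) :=
      hW2 (b, _) (hM _ My) bzy.
    by rewrite e1 e2.
  - have [Wc [oWc hWc]] := pact_cont pa a (proj2 (hclopen b)).
    exists (fun y => pdom pa a y /\ Wc y); split; first by apply: open_I => //; case: (hclopen a).
    split; first by split => //; apply/hWc.
    move=> y [ay Wcy]; have bzy := proj2 (hWc y ay) Wcy.
    by rewrite !(van0 vh) ?mulr0.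
apply: (steinberg_intro (C := fun p => List.In p.1
    (List.flat_map (fun a => List.map (fun b => gmul gs a b) lh_) lf_) /\
    exists a, f a p.2 != 0)) => //.
- move=> [c x] _.
  pose N a := epsilon (inhabits (fun _ => True)) (fun N => open tX N /\ N x /\
     forall y, N y -> T c y a = T c x a).
  have hN : forall a, open tX (N a) /\ N a x /\ forall y, N a y -> T c y a = T c x a.
    by move=> a; apply: (epsilon_spec (inhabits (fun _ => True)) _ (term_lc c x a)).
  exists (fun q => q.1 = c /\ forall a, List.In a lf_ -> N a q.2); split.
    apply: (open_GX_slice (U := fun y => forall a, List.In a lf_ -> N a y) (c := c)).
    apply: open_Ilist => a _; exact: (proj1 (hN a)).
  split; first by split => // a _; exact: (proj1 (proj2 (hN a))).
  move=> [d y] [/= -> Ny] _; rewrite !conv_eq; apply: sum_eq_In => a ai.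
  exact: (proj2 (proj2 (hN a)) y (Ny a ai)).
- apply: (compact_list_prod
    (l := List.flat_map (fun a => List.map (fun b => gmul gs a b) lh_) lf_)
    (C := fun y => exists a, f a y != 0)).
  apply: compact_ext (compact_proj (steinberg_N sf)) => y; split; case=> a nz; by exists a.
- move=> [c y] /= /nz_term [a [fa ha]]; split; last by exists a.
  apply/List.in_flat_map; exists a; split; first exact: covf fa.
  apply/List.in_map_iff; exists (gmul gs (ginv gs a) c); split; first by rewrite gmulVK.
  exact: covh ha.
Qed.

End Stein.

Import GRing.Theory.
Local Open Scope ring_scope.
Unset Implicit Arguments.

Theorem mainTheorem11 (X : Type) (tX : topology X)
  (hH : hausdorff tX) (hLC : locally_compact tX) (hTD : totally_disconnected tX)
  (G : Type) (gs : group_str G) (K : fieldType) (pa : partial_action gs tX)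
  (hclopen : forall g, clopen tX (pdom pa g)) :
  (forall V, open tX V -> pa_invariant pa V ->
     graded_ideal pa (@steinberg_on _ _ _ _ pa K V)) /\
  (forall V W, open tX V -> pa_invariant pa V -> open tX W -> pa_invariant pa W ->
     (forall f : G -> X -> K, steinberg_on pa V f <-> steinberg_on pa W f) ->
     forall x, V x <-> W x) /\
  (forall I : (G -> X -> K) -> Prop, graded_ideal pa I ->
     exists V, open tX V /\ pa_invariant pa V /\
       forall f, I f <-> steinberg_on pa V f).
Proof.
have ZD := zero_dim hH hLC hTD.
have cU : forall g y, pdom pa g y -> exists U, compact tX U /\ open tX U /\
    open tX (fun z => ~ U z) /\ U y /\ forall z, U z -> pdom pa g z.
  by move=> g y gy; apply: ZD gy; case: (hclopen g).
have stb : forall (v : K) g U, compact tX U -> open tX U -> open tX (fun z => ~ U z) ->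
    (forall z, U z -> pdom pa g z) -> steinberg pa (bisv v g U).
  by move=> v g U c o oc s; apply: steinberg_bisv.
split; [|split].
- move=> V oV iV; split; [split; [|split; [|split]]|].
  + by move=> f [].
  + split; first exact: steinberg_zero.
    by move=> g x; rewrite eqxx.
  + move=> f h [sf vf] [sh vh]; split; first exact: steinberg_sub.
    move=> g x nz; case: (boolP (f g x != 0)) => [/vf //|/negPn/eqP fz].
    by apply: (vh g); move: nz; rewrite fz sub0r oppr_eq0.
  + move=> f h sf [sh vh]; split; split; try exact: conv_steinberg.
    * move=> c x /fsum_nz [a /mul_nz [fa ha]].
      have ax := proj1 sf _ _ fa.
      have := iV (ginv gs a) _ (pact_dom ax) (vh _ _ ha).
      by rewrite ginvK pact_K // => -[].
    * by move=> c x /fsum_nz [a /mul_nz [ha _]]; apply: (vh a).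
  + move=> f g h [sf vf] spec; split; first exact: steinberg_comp sf spec.
    by move=> c x; case: (spec c x) => -[_ ->] //; [apply: vf | rewrite eqxx].
- have H : forall V W : X -> Prop, open tX V ->
      (forall f : G -> X -> K, steinberg_on pa V f -> steinberg_on pa W f) ->
      forall x, V x -> W x.
    move=> V W oV e x Vx.
    have [U [cUU [oU [onU [Ux sU]]]]] := ZD x V oV Vx.
    have sb := stb 1 (gone gs) U cUU oU onU (fun z _ => pdom_one pa z).
    have [_ vW] := e _ (conj sb (fun g y nz => sU y (proj2 (bisv_nz nz)))).
    by apply: (vW (gone gs)); rewrite bisvT // oner_neq0.
  move=> V W oV _ oW _ e x; split; apply: H => // f; apply e.
- move=> I [[Istb [I0 [Isub Iconv]]] Igr].
  have Iadd : forall f h, I f -> I h -> I (fun g x => f g x + h g x).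
    move=> f h If Ih; have := Isub _ _ If (Isub _ _ I0 Ih).
    congr I; apply: functional_extensionality => g; apply: functional_extensionality => x.
    by rewrite sub0r opprK.
  pose V x := exists f c, I f /\ f c x != 0.
  have Vloc : forall x, V x -> exists U, compact tX U /\ open tX U /\
      open tX (fun z => ~ U z) /\ U x /\ I (bisv 1 (gone gs) U).
    move=> x [f0 [c [If0 nz]]].
    have cx := proj1 (Istb _ If0) _ _ nz.
    have [W1 [cW1 [oW1 [onW1 [W1y sW1]]]]] := cU _ _ (pact_dom cx).
    pose h := conv pa f0 (bisv 1 (ginv gs c) W1).
    have Ih : I h := proj2 (Iconv _ _ (stb 1 _ _ cW1 oW1 onW1 sW1) If0).
    have hx : h (gone gs) x = f0 c x.
      by rewrite /h (conv_bis_r _ _ _ _ _ (a0 := c)) ?gmulg1 // bisvT // mulr1.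
    pose e := fun d y => if excluded_middle_informative (d = gone gs) then h d y else 0.
    have Ie : I e.
      apply: (Igr h (gone gs) e Ih) => d y; rewrite /e.
      by case: excluded_middle_informative => H; [left | right].
    have e_ne : forall d y, d <> gone gs -> e d y = 0.
      by move=> d y nd; rewrite /e; case: excluded_middle_informative.
    have e_eq : forall y, e (gone gs) y = h (gone gs) y.
      by move=> y; rewrite /e; case: excluded_middle_informative.
    pose a := e (gone gs) x.
    have ea : a = f0 c x by rewrite /a e_eq.
    have anz : a != 0 by rewrite ea.
    have [_ [lce _]] := Istb _ Ie.
    have [Wp [oWp [Wpx hWp]]] := lce (gone gs, x) (pdom_one pa x).
    have [M [oM [Mx hM]]] := open_GX_elim oWp Wpx.
    have [U [cUU [oU [onU [Ux sU]]]]] := ZD x M oM Mx.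
    exists U; do 4 (split => //).
    have Ik := proj1 (Iconv _ _ (stb a^-1 (gone gs) U cUU oU onU (fun z _ => pdom_one pa z)) Ie).
    suff -> : bisv 1 (gone gs) U = conv pa (bisv a^-1 (gone gs) U) e by [].
    apply: functional_extensionality => d; apply: functional_extensionality => y.
    symmetry; rewrite conv_bis_l ginv1 gmul1g pact_one.
    case: (classic (U y)) => Uy; last by rewrite !bisvF ?mul0r // => -[].
    rewrite bisvT //.
    case: (classic (d = gone gs)) => [ed|nd]; last by rewrite e_ne // mulr0 bisvF // => -[/nd].
    subst d; rewrite bisvT //.
    have -> : e (gone gs) y = a by apply: (hWp (gone gs, y) (hM y (sU y Uy)) (pdom_one pa y)).
    by rewrite mulVf.
  have Vunion : forall l : list (X -> Prop), (forall U, List.In U l -> I (bisv 1 (gone gs) U)) ->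
      I (bisv 1 (gone gs) (fun y => exists U, List.In U l /\ U y)).
    elim => [|A l IH] hl.
      suff -> : bisv 1 (gone gs) (fun y => exists U, List.In U [::] /\ U y) = fun (_ : G) (_ : X) => (0 : K) by [].
      apply: functional_extensionality => d; apply: functional_extensionality => y.
      by rewrite bisvF // => -[_ [U [[] _]]].
    have IA := hl A (or_introl erefl).
    have IB := IH (fun U Ul => hl U (or_intror Ul)).
    have IAB := proj1 (Iconv _ _ (Istb _ IA) IB).
    have := Isub _ _ (Iadd _ _ IA IB) IAB.
    congr I; apply: functional_extensionality => d; apply: functional_extensionality => y.
    rewrite conv_bis_l ginv1 gmul1g pact_one.
    set SA := (fun y => exists U, List.In U (A :: l) /\ U y).
    set SB := (fun y => exists U, List.In U l /\ U y).
    case: (classic (d = gone gs)) => [ed|nd]; last first.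
      have z1 : forall S, bisv (1 : K) (gone gs) S d y = 0 by move=> S; apply: bisvF => -[/nd].
      by rewrite !z1 mulr0 addr0 subr0.
    subst d; case: (classic (A y)) => Ay.
      have SAy : SA y by exists A; split => //; left.
      by rewrite !(bisvT _ erefl Ay) (bisvT _ erefl SAy) mul1r addrK.
    have zA : bisv (1 : K) (gone gs) A (gone gs) y = 0 by apply: bisvF => -[].
    rewrite zA mul0r subr0 add0r.
    case: (classic (SB y)) => SBy.
      have SAy : SA y by case: SBy => U [Ul Uy]; exists U; split => //; right.
      by rewrite (bisvT _ erefl SBy) (bisvT _ erefl SAy).
    have nSA : ~ SA y by case=> U [[<- //|Ul] Uy]; apply: SBy; exists U.
    by rewrite !bisvF // => -[].
  have oV : open tX V.
    apply: open_nbhd => x [f [c [If nz]]].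
    have [vf [lf _]] := Istb _ If.
    have [Wp [oWp [Wpx hWp]]] := lf (c, x) (vf _ _ nz).
    have [M [oM [Mx hM]]] := open_GX_elim oWp Wpx.
    exists (fun y => M y /\ pdom pa c y); split; first by apply: open_I => //; case: (hclopen c).
    split; first by split => //; apply: vf.
    move=> y [My cy]; exists f, c; split => //.
    by rewrite (hWp (c, y) (hM y My) cy).
  exists V; split => //; split.
  + move=> g x gx [f [c [If nz]]]; split; first exact: pact_dom.
    have [W1 [cW1 [oW1 [onW1 [W1y sW1]]]]] := cU _ _ (pact_dom gx).
    pose h := conv pa (bisv 1 (ginv gs g) W1) f.
    have Ih : I h := proj1 (Iconv _ _ (stb 1 _ _ cW1 oW1 onW1 sW1) If).
    exists h, (gmul gs (ginv gs g) c); split => //.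
    by rewrite /h conv_bis_l ginvK gmulVK pact_K // bisvT // mul1r.
  + move=> f; split.
    * move=> If; split; first exact: Istb.
      by move=> g x nz; exists f, g.
    * move=> [sf vf].
      pose idx := {x : X | V x}.
      pose Uf (i : idx) := proj1_sig (constructive_indefinite_description _
          (Vloc (proj1_sig i) (proj2_sig i))).
      have hUf : forall i : idx, compact tX (Uf i) /\ open tX (Uf i) /\
          open tX (fun z => ~ Uf i z) /\ Uf i (proj1_sig i) /\ I (bisv 1 (gone gs) (Uf i)).
        by move=> i; rewrite /Uf; case: constructive_indefinite_description.
      have cov : forall p : G * X, f p.1 p.2 != 0 -> exists i : idx, Uf i p.2.
        move=> [c y] /= nz; exists (exist _ y (vf c y nz)).
        exact: (proj1 (proj2 (proj2 (proj2 (hUf _))))).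
      have cN := steinberg_N sf.
      have [s hs] := cN idx (fun i p => Uf i p.2)
        (fun i => open_GX_cyl (proj1 (proj2 (hUf i)))) cov.
      pose l := List.map Uf s.
      have Iu := Vunion l (fun U Ul => let: ex_intro i (conj e ii) := proj1 (List.in_map_iff _ _ _) Ul in
        eq_ind _ (fun U => I (bisv 1 (gone gs) U)) (proj2 (proj2 (proj2 (proj2 (hUf i))))) _ e).
      have := proj2 (Iconv _ _ sf Iu).
      congr I; apply: functional_extensionality => d; apply: functional_extensionality => y.
      rewrite conv_bis_l ginv1 gmul1g pact_one.
      case: (boolP (f d y != 0)) => [nz|/negPn/eqP ->]; last by rewrite mulr0.
      rewrite bisvT ?mul1r //.
      have [i [ii Ui]] := hs (d, y) nz.
      exists (Uf i); split => //; apply/List.in_map_iff; by exists i.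
Qed.
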